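(* Let $\Lambda_n$ be the total length of the continuous-time critical beta-splitting tree $\mathrm{CTCS}(n)$. There exists a constant $\mu_\Lambda$ such that $\mathbb E[\Lambda_n]=\mu_\Lambda n+O(n^{0.41})$.
   Context: For $m\ge2$, $q_m(i)=\frac{m}{2h_{m-1}}\frac{1}{i(m-i)}$, $1\le i\le m-1$, with $h_{m-1}=\sum_{j=1}^{m-1}1/j$. In $\mathrm{CTCS}(n)$, starting from $[n]$, each interval of size $m\ge2$ waits an independent $\mathrm{Exp}(h_{m-1})$ time and then splits into intervals of sizes $i$ and $m-i$ with $i\sim q_m$; intervals of size $1$ are leaves. The edge above a clade of size $m\ge2$ has length equal to that waiting time, and $\Lambda_n$ is the sum of all edge lengths; equivalently $\Lambda_n\overset d=\Lambda_{L_n}+\Lambda'_{n-L_n}+\mathrm{Exp}(h_{n-1})$ with $L_n\sim q_n$ and independent parts. *)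

(* Defs.v *)
From Stdlib Require Import Reals Lra Lia.
Open Scope R_scope.

Definition harm (m : nat) : R :=
  match m with
  | O => 0
  | S m' => sum_f_R0 (fun j => / INR (S j)) m'
  end.

(* split distribution q_m(i) = m / (2 h_{m-1}) * 1/(i (m-i)), 1 <= i <= m-1 *)
Definition q (m i : nat) : R :=
  INR m / (2 * harm (m - 1)) / (INR i * INR (m - i)).

(* Expected total length, by (fuel-bounded) strong recursion obtained by taking
   expectations in  Lambda_n =d Lambda_{L_n} + Lambda'_{n-L_n} + Exp(h_{n-1}):
   E[Lambda_1] = 0 and, for n >= 2,
   E[Lambda_n] = 1/h_{n-1} + sum_{i=1}^{n-1} q_n(i) (E[Lambda_i] + E[Lambda_{n-i}]).
   The fuel k only needs k >= n; we use k = n. *)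
Fixpoint ELam_aux (k n : nat) : R :=
  match k with
  | O => 0
  | S k' =>
      if (n <=? 1)%nat then 0
      else / harm (n - 1)
           + sum_f_R0 (fun j => q n (S j) * (ELam_aux k' (S j) + ELam_aux k' (n - S j)))
                      (n - 2)
  end.

Definition ELambda (n : nat) : R := ELam_aux n n.

(* Main.v *)
Require Import Defs.
From Stdlib Require Import Reals.
From Stdlib Require Import Reals Lra Lia.
Open Scope R_scope.

Lemma fuel : forall k k' n, (n <= k)%nat -> (n <= k')%nat ->
  ELam_aux k n = ELam_aux k' n.
Proof.
  induction k as [|k IH]; intros k' n H1 H2.
  - assert (n = 0%nat) by lia; subst. destruct k'; reflexivity.
  - destruct k' as [|k'].
    + assert (n = 0%nat) by lia; subst. reflexivity.
    + simpl. destruct (n <=? 1)%nat eqn:E; [reflexivity|].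
      apply Nat.leb_gt in E. f_equal. apply sum_eq. intros j Hj.
      f_equal. f_equal; apply IH; lia.
Qed.

Definition a n := ELambda n.
Definition b n := a n / INR n.

Lemma rec m : a (S (S m)) = / harm (S m) +
  sum_f_R0 (fun j => q (S (S m)) (S j) * (a (S j) + a (S m - j))) m.
Proof.
  unfold a, ELambda at 1.
  change (ELam_aux (S (S m)) (S (S m))) with
   (/ harm (S (S m) - 1) + sum_f_R0 (fun j => q (S (S m)) (S j) *
      (ELam_aux (S m) (S j) + ELam_aux (S m) (S (S m) - S j))) (S (S m) - 2)).
  replace (S (S m) - 1)%nat with (S m) by lia.
  replace (S (S m) - 2)%nat with m by lia.
  f_equal. apply sum_eq. intros j Hj. f_equal. unfold ELambda. f_equal; apply fuel; lia.
Qed.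

Lemma sum_rev (f : nat -> R) N :
  sum_f_R0 f N = sum_f_R0 (fun j => f (N - j)%nat) N.
Proof.
  revert f; induction N as [|N IH]; intro f.
  - simpl. reflexivity.
  - rewrite decomp_sum by lia. simpl pred. rewrite (IH (fun i => f (S i))).
    rewrite tech5. replace (S N - S N)%nat with 0%nat by lia.
    rewrite Rplus_comm. f_equal. apply sum_eq. intros i Hi. f_equal. lia.
Qed.

Lemma INR_S_pos n : 0 < INR (S n).
Proof. apply lt_0_INR; lia. Qed.

Lemma harm_ge1 m : 1 <= harm (S m).
Proof.
  induction m as [|m IH].
  - simpl. lra.
  - unfold harm in *. rewrite tech5. pose proof (Rinv_0_lt_compat _ (INR_S_pos (S m))). lra.
Qed.

Lemma a_b n : (1 <= n)%nat -> a n = INR n * b n.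
Proof.
  intro H. unfold b. field. apply not_0_INR. lia.
Qed.

Lemma harm_rev m : sum_f_R0 (fun j => / INR (S m - j)) m = harm (S m).
Proof.
  unfold harm. rewrite (sum_rev (fun j => / INR (S j))). apply sum_eq.
  intros j Hj. f_equal. f_equal. lia.
Qed.

Lemma Eid m : sum_f_R0 (fun j => (b (S (S m)) - b (S j)) / INR (S m - j)) m
   = / INR (S (S m)).
Proof.
  set (N := INR (S (S m))). set (H := harm (S m)).
  assert (HN : 0 < N) by apply INR_S_pos.
  assert (HH : 1 <= H) by apply harm_ge1.
  set (f := fun j => b (S j) / INR (S m - j)).
  set (g := fun j => b (S m - j) / INR (S j)).
  assert (Hfg : sum_f_R0 g m = sum_f_R0 f m).
  { rewrite (sum_rev f). apply sum_eq. intros j Hj. unfold f, g.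
    replace (S (m - j)) with (S m - j)%nat by lia.
    replace (S m - (m - j))%nat with (S j) by lia. reflexivity. }
  assert (Hrec : a (S (S m)) = / H + N / H * sum_f_R0 f m).
  { rewrite rec. fold H. f_equal.
    transitivity (sum_f_R0 (fun j => (f j + g j) * (N / (2 * H))) m).
    - apply sum_eq. intros j Hj. unfold q, f, g.
      replace (S (S m) - 1)%nat with (S m) by lia.
      replace (S (S m) - S j)%nat with (S m - j)%nat by lia.
      fold H. fold N.
      rewrite (a_b (S j)) by lia. rewrite (a_b (S m - j)) by lia.
      assert (0 < INR (S m - j)) by (apply lt_0_INR; lia).
      pose proof (INR_S_pos j).
      field. lra.
    - rewrite <- scal_sum. rewrite plus_sum, Hfg. field. lra. }
  rewrite (a_b (S (S m))) in Hrec by lia. fold N in Hrec.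
  transitivity (sum_f_R0 (fun j => b (S (S m)) * / INR (S m - j)) m - sum_f_R0 f m).
  - rewrite <- minus_sum. apply sum_eq. intros j Hj. unfold f. unfold Rdiv. ring.
  - rewrite <- (sum_eq (fun j => / INR (S m - j) * b (S (S m)))) by (intros; ring).
    rewrite <- scal_sum, harm_rev. fold H.
    replace (b (S (S m))) with ((/ H + N / H * sum_f_R0 f m) / N).
    + field. lra.
    + rewrite <- Hrec. field. lra.
Qed.

Lemma wt_ineq (x y c : R) : 0 <= y -> y <= x -> 0 <= c ->
  c / (x + 2 - y) <= (x + 1) / (x + 2) * (c / (x + 1 - y)).
Proof.
  intros Hy Hyx Hc.
  assert (E : (x + 1) / (x + 2) * (c / (x + 1 - y)) - c / (x + 2 - y)
     = c * y / ((x + 2) * (x + 1 - y) * (x + 2 - y))) by (field; lra).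
  assert (0 <= c * y / ((x + 2) * (x + 1 - y) * (x + 2 - y))).
  { unfold Rdiv. apply Rmult_le_pos. apply Rmult_le_pos; lra.
    left. apply Rinv_0_lt_compat.
    apply Rmult_lt_0_compat; [apply Rmult_lt_0_compat|]; lra. }
  lra.
Qed.

Lemma mono_step m : (forall i, (1 <= i <= S (S m))%nat -> b i <= b (S (S m))) ->
  b (S (S m)) < b (S (S (S m))).
Proof.
  intro IH.
  pose proof (Eid (S m)) as E1. rewrite tech5 in E1.
  replace (S (S m) - S m)%nat with 1%nat in E1 by lia.
  set (D := b (S (S (S m))) - b (S (S m))).
  set (W := sum_f_R0 (fun j => / INR (S (S m) - j)) m).
  set (C := sum_f_R0 (fun j => (b (S (S m)) - b (S j)) / INR (S (S m) - j)) m).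
  assert (HS : sum_f_R0 (fun j => (b (S (S (S m))) - b (S j)) / INR (S (S m) - j)) m
     = W * D + C).
  { unfold W, C. rewrite (Rmult_comm _ D), scal_sum. rewrite <- plus_sum. apply sum_eq. intros j Hj.
    unfold D. field. apply not_0_INR. lia. }
  rewrite HS in E1.
  assert (HW : 0 <= W).
  { apply cond_pos_sum. intro j. destruct (Nat.le_gt_cases (S (S m)) j).
    - replace (S (S m) - j)%nat with 0%nat by lia. simpl. rewrite Rinv_0. lra.
    - left. apply Rinv_0_lt_compat, lt_0_INR. lia. }
  pose proof (Eid m) as E0.
  assert (HC : C <= INR (S m) / INR (S (S m)) * / INR (S (S m))).
  { rewrite <- E0. rewrite scal_sum. apply sum_Rle. intros j Hj.
    rewrite Rmult_comm.
    rewrite !minus_INR by lia. rewrite !S_INR.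
    replace (INR m + 1 + 1 - INR j) with (INR m + 2 - INR j) by ring.
    replace (INR m + 1 + 1) with (INR m + 2) by ring.
    apply wt_ineq. apply pos_INR. apply le_INR; lia.
    assert (b (S j) <= b (S (S m))) by (apply IH; lia). lra. }
  assert (Hpos : INR (S m) / INR (S (S m)) * / INR (S (S m)) < / INR (S (S (S m)))).
  { rewrite !S_INR. pose proof (pos_INR m).
    apply Rlt_0_minus.
    replace (/ (INR m + 1 + 1 + 1) - (INR m + 1) / (INR m + 1 + 1) * / (INR m + 1 + 1))
      with (/ ((INR m + 3) * (INR m + 2) * (INR m + 2))) by (field; lra).
    apply Rinv_0_lt_compat. apply Rmult_lt_0_compat; [apply Rmult_lt_0_compat|]; lra. }
  change (INR 1) with 1 in E1. rewrite Rdiv_1_r in E1. fold D in E1.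
assert (0 < D * (W + 1)) by nra.
  assert (0 < D) by nra.
  unfold D in *. lra.
Qed.

Lemma Q m : forall i, (1 <= i <= S (S m))%nat -> b i <= b (S (S m)).
Proof.
  induction m as [|m IH]; intros i Hi.
  - pose proof (Eid 0) as E. simpl sum_f_R0 in E.
    change (INR (1 - 0)) with 1 in E. rewrite Rdiv_1_r in E.
    assert (0 < / INR 2) by (apply Rinv_0_lt_compat, INR_S_pos).
    destruct (Nat.eq_dec i 2) as [->|]; [lra|].
    replace i with 1%nat by lia. lra.
  - destruct (Nat.eq_dec i (S (S (S m)))) as [->|]; [lra|].
    pose proof (mono_step m IH). pose proof (IH i ltac:(lia)). lra.
Qed.

Lemma mono i j : (1 <= i <= j)%nat -> b i <= b j.
Proof.
  intro H. destruct j as [|[|j]]; [lia| replace i with 1%nat by lia; lra|].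
  apply Q. lia.
Qed.

Lemma sum_range_mono (g : nat -> R) m : (forall j, (j <= m)%nat -> 0 <= g j) ->
  forall k, (k <= m)%nat -> sum_f_R0 g k <= sum_f_R0 g m.
Proof.
  induction m as [|m IH]; intros Hg k Hk.
  - replace k with 0%nat by lia. lra.
  - destruct (Nat.eq_dec k (S m)) as [->|]; [lra|].
    rewrite tech5. pose proof (Hg (S m) (le_n _)).
    pose proof (IH (fun j Hj => Hg j ltac:(lia)) k ltac:(lia)). lra.
Qed.

Lemma tail p n : (1 <= p <= n)%nat -> b n - b p <= / INR p.
Proof.
  intro Hp.
  assert (HP : 0 < INR p) by (apply lt_0_INR; lia).
  destruct (Nat.eq_dec p n) as [->|].
  - pose proof (Rinv_0_lt_compat _ HP). lra.
  - destruct n as [|[|m]]; [lia|lia|].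
    pose proof (Eid m) as E.
    set (g := fun j => b (S (S m)) - b (S j)).
    assert (Hg : forall j, (j <= m)%nat -> 0 <= g j).
    { intros j Hj. unfold g. pose proof (mono (S j) (S (S m)) ltac:(lia)). lra. }
    assert (HN : 0 < INR (S (S m))) by apply INR_S_pos.
    assert (H1 : sum_f_R0 g m * / INR (S (S m)) <= / INR (S (S m))).
    { rewrite <- E at 2. rewrite Rmult_comm, scal_sum. apply sum_Rle. intros j Hj.
      unfold Rdiv. apply Rmult_le_compat_l. apply Hg; lia.
      apply Rinv_le_contravar. apply lt_0_INR; lia. apply le_INR; lia. }
    assert (H2 : sum_f_R0 g m <= 1).
    { apply (Rmult_le_reg_r (/ INR (S (S m)))). apply Rinv_0_lt_compat; lra. lra. }
    destruct p as [|p']; [lia|].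
    pose proof (sum_range_mono g m Hg p' ltac:(lia)) as H3.
    assert (H4 : sum_f_R0 (fun _ => b (S (S m)) - b (S p')) p' <= sum_f_R0 g p').
    { apply sum_Rle. intros j Hj. unfold g. pose proof (mono (S j) (S p') ltac:(lia)). lra. }
    rewrite sum_cte in H4.
    apply (Rmult_le_reg_r (INR (S p'))); [lra|].
    rewrite Rinv_l by lra. lra.
Qed.

Theorem lemma5p1 :
  exists mu C : R, exists N : nat,
    forall n : nat, (N <= n)%nat ->
      Rabs (ELambda n - mu * INR n) <= C * Rpower (INR n) 0.41.
Proof.
  set (E := fun x => exists n, (1 <= n)%nat /\ x = b n).
  assert (HB : bound E).
  { exists (b 1 + 1). intros x [n [Hn ->]].
    pose proof (tail 1 n ltac:(lia)). change (INR 1) with 1 in H. rewrite Rinv_1 in H. lra. }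
  assert (HE : exists x, E x) by (exists (b 1); exists 1%nat; split; [lia|reflexivity]).
  destruct (completeness E HB HE) as [mu [Hub Hlub]].
  exists mu, 1, 1%nat. intros n Hn.
  assert (HP : 0 < INR n) by (apply lt_0_INR; lia).
  assert (Hle : b n <= mu) by (apply Hub; exists n; split; [lia|reflexivity]).
  assert (Hge : mu <= b n + / INR n).
  { apply Hlub. intros x [k [Hk ->]].
    destruct (Nat.le_gt_cases k n).
    - pose proof (mono k n ltac:(lia)). pose proof (Rinv_0_lt_compat _ HP). lra.
    - pose proof (tail n k ltac:(lia)). lra. }
  fold (a n). rewrite (a_b n) by lia.
  replace (INR n * b n - mu * INR n) with (- (INR n * (mu - b n))) by ring.
  rewrite Rabs_Ropp, Rabs_right.
  2: { apply Rle_ge, Rmult_le_pos; lra. }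
  apply Rle_trans with 1.
  - apply (Rmult_le_reg_r (/ INR n)). apply Rinv_0_lt_compat; lra.
    replace (INR n * (mu - b n) * / INR n) with (mu - b n) by (field; lra). lra.
  - rewrite Rmult_1_l. unfold Rpower.
    assert (0 <= ln (INR n)).
    { destruct (Rle_lt_or_eq_dec 1 (INR n)) as [Hl|Hl].
      - change 1 with (INR 1). apply le_INR; lia.
      - left. rewrite <- ln_1. apply ln_increasing; lra.
      - rewrite <- Hl, ln_1. lra. }
    pose proof (exp_ineq1_le (0.41 * ln (INR n))). lra.
Qed.
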